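(* For every integer $m\ge0$, the space of $L_1$-invariants in $S^m(Q^\times/Q)$ is $\mathbb{C}q_1^m$; that is, $H^0(L_1;S^*(Q^\times/Q))=\mathbb{C}[q_1]$ is the polynomial algebra in $q_1$.
   Context: $Q^\times$ is the Fréchet space of holomorphic quadratic differentials $f(z)dz^2$ on $\mathbb{C}\setminus\{0\}$ and $Q\subset Q^\times$ the closed subspace of those with $f$ entire; the Lie algebra of holomorphic vector fields on $\mathbb{C}$ vanishing at $0$ acts on both by $(\xi\frac{d}{dz})\cdot(fdz^2)=(\xi f'+2\xi'f)dz^2$, hence on the quotient $Q^\times/Q$. $L_1$ is the closed subalgebra generated by $e_k=z^{k+1}\frac{d}{dz}$, $k\ge1$ (holomorphic vector fields on $\mathbb{C}$ vanishing to order at least $2$ at $0$). For $\nu\in\mathbb{Z}$, $q_\nu$ denotes the class of $z^{\nu-2}dz^2$ in $Q^\times/Q$, so $q_1$ is the class of $z^{-1}dz^2$. $S^m(Q^\times/Q)$ is the completed $m$-fold symmetric tensor power over $\mathbb{C}$ with the diagonal action, $S^*=\bigoplus_{m\ge0}S^m$ with the symmetric product, and $H^0(L_1;\cdot)$ denotes $L_1$-invariants. *)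

(* Defs.v *)
From mathcomp Require Import all_boot all_order all_algebra.
From mathcomp Require Import fingroup perm reals complex.
Set Implicit Arguments. Unset Strict Implicit. Unset Printing Implicit Defensive.
Import Order.TTheory GRing.Theory Num.Theory.
Local Open Scope ring_scope.
Local Open Scope complex_scope.

(* Concrete coefficient model of S^m(Q^x/Q) over C := R[i], R : realType.
   A tensor q_{nu_1} (x) ... (x) q_{nu_m} is indexed by nu : 'I_m -> int;
   q_nu is the class of z^(nu-2) dz^2, which is 0 in Q^x/Q when nu >= 2.
   An element of the completed m-fold symmetric power is a (formal, convergent)
   sum  sum_nu c(nu) q_{nu_1}...q_{nu_m}  with c symmetric, supported on
   {nu | forall j, nu_j <= 1}, and such that the associated power series in
   w = 1/z is entire in m variables (absolute summability for every radius). *)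

Definition idx (m : nat) := {ffun 'I_m -> int}.
Definition coef (R : realType) (m : nat) := idx m -> R[i].

(* nu_j <= 1 for all j : the monomial is a nonzero class in (Q^x/Q)^{(x)m} *)
Definition in_support (m : nat) (nu : idx m) : bool := [forall j, nu j <= 1].

Definition shift (m : nat) (nu : idx m) (i : 'I_m) (k : int) : idx m :=
  [ffun j => if j == i then nu j - k else nu j].

(* degree in w = 1/z of the monomial: q_nu <-> w^(2-nu) *)
Definition wdeg (m : nat) (nu : idx m) : nat := \sum_(j < m) `|2 - nu j|%N.

Definition Sm_elem (R : realType) (m : nat) (c : coef R m) : Prop :=
  [/\ (forall nu, ~~ in_support nu -> c nu = 0),
      (forall (s : 'S_m) (nu : idx m), c [ffun j => nu (s j)] = c nu) &
      (forall r : R, 0 < r -> exists M : R, forall s : seq (idx m), uniq s ->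
          \sum_(nu <- s) `|c nu| * ((r ^+ wdeg nu)%:C) <= M%:C)].

(* Action of e_k = z^(k+1) d/dz (diagonal, Leibniz rule):
   e_k . q_nu = (nu + 2k) q_(nu+k), so the coefficient of e_k . x at mu
   (mu in the support) is  sum_i (mu_i + k) c(mu - k e_i). *)
Definition act_e (R : realType) (m : nat) (k : nat) (c : coef R m) : coef R m :=
  fun mu => if in_support mu then
              \sum_(i < m) ((mu i + k%:Z)%:~R) * c (shift mu i k%:Z)
            else 0.

(* L_1-invariance: annihilated by the topological generators e_k, k >= 1. *)
Definition L1_invariant (R : realType) (m : nat) (c : coef R m) : Prop :=
  forall k : nat, (0 < k)%N -> forall mu : idx m, act_e k c mu = 0.

Definition q1pow (R : realType) (m : nat) : coef R m :=
  fun nu => if [forall j, nu j == 1] then 1 else 0.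

(* Main.v *)
Require Import Defs.
From mathcomp Require Import all_boot all_order all_algebra.
From mathcomp Require Import fingroup perm reals complex.
From mathcomp Require Import zify.
From Stdlib Require Import FunctionalExtensionality.
Import GRing.Theory Num.Theory.
Local Open Scope ring_scope.
Local Open Scope complex_scope.

Lemma key (R : realType) (m : nat) (c : coef R m) :
  Sm_elem c -> L1_invariant c ->
  forall n (nu : idx m), in_support nu ->
    #|[pred j | nu j != 1]| = n -> (0 < n)%N -> c nu = 0.
Proof.
case=> _ Hsym _ Hinv n.
elim: n {-2}n (leqnn n) => [|N IH] n Hn nu Hsup Hcard Hn0; first by lia.
have : (0 < #|[pred j | nu j != 1]|)%N by rewrite Hcard.
case/card_gt0P => i; rewrite inE => Hi.
have Hle : forall j, nu j <= 1 by move=> j; move/forallP: Hsup => /(_ j).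
have Hi0 : nu i <= 0.
  have := Hle i; move: Hi; rewrite -subr_eq0 => Hi H; lia.
have [k Hk] : exists k : nat, k%:Z = 1 - nu i.
  case E: (1 - nu i) => [k|k]; first by exists k.
  exfalso; move: E; lia.
have k0 : (0 < k)%N by lia.
pose mu : idx m := [ffun l => if l == i then 1 else nu l].
have Hmu : in_support mu.
  apply/forallP => j; rewrite ffunE; case: ifP => // _; exact: Hle.
have := Hinv k k0 mu; rewrite /act_e Hmu.
have Hsh_i : shift mu i k%:Z = nu.
  apply/ffunP => j; rewrite !ffunE; case: eqP => [->|//].
  by rewrite Hk opprB addrC subrK.
have Hterm : forall l : 'I_m,
    ((mu l + k%:Z)%:~R * c (shift mu l k%:Z) : R[i]) =
    if (l == i) || (nu l == 1) then (1 + k%:Z)%:~R * c nu else 0.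
  move=> l; case: (eqVneq l i) => [->|li] /=.
    by rewrite Hsh_i /mu ffunE eqxx.
  have mul : mu l = nu l by rewrite /mu ffunE (negbTE li).
  case: (eqVneq (nu l) 1) => nul.
    rewrite mul nul; congr (_ * _).
    rewrite -(Hsym (tperm i l)); congr (c _).
    apply/ffunP => j; rewrite !ffunE.
    have il : i != l by rewrite eq_sym.
    case: (eqVneq j l) => [->|jl].
      by rewrite tpermR (negbTE il) eqxx nul.
    case: (eqVneq j i) => [->|ji].
      by rewrite tpermL eqxx (negbTE li) nul Hk opprB addrC subrK.
    have -> : tperm i l j = j by apply: tpermD; rewrite eq_sym.
    by rewrite (negbTE jl) (negbTE ji).
  have Hc : (#|[pred j | shift mu l k%:Z j != 1]|.+1 = n)%N.
    rewrite -Hcard [in RHS](cardD1 i) inE Hi /= add1n.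
    congr S; apply/eq_card => j; rewrite !inE !ffunE.
    case: (eqVneq j l) => [->|jl].
      rewrite (negbTE li) nul /=.
      have := Hle l; move: nul; rewrite -subr_eq0 => nul H.
      apply/negP => /eqP H2; lia.
    case: (eqVneq j i) => [->|ji] //=.
  rewrite (IH #|[pred j | shift mu l k%:Z j != 1]|) ?mulr0 //.
  - by move: Hn; rewrite -Hc.
  - apply/forallP => j; rewrite !ffunE; case: ifP => [/eqP ->|_].
      rewrite (negbTE li); have := Hle l; lia.
    case: ifP => _ //; exact: Hle.
  - apply/card_gt0P; exists l; rewrite inE ffunE eqxx mul.
    have := Hle l; move: nul; rewrite -subr_eq0 => nul H.
    apply/negP => /eqP H2; lia.
rewrite (eq_bigr _ (fun l _ => Hterm l)) -big_mkcond /= sumr_const.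
move/eqP; rewrite mulrn_eq0 mulf_eq0 intr_eq0.
have -> : (1 + k%:Z == 0) = false by apply/negbTE; lia.
have -> : (#|[pred l | (l == i) || (nu l == 1)]| == 0)%N = false.
  apply/negbTE; rewrite -lt0n; apply/card_gt0P; exists i; by rewrite inE eqxx.
by move/eqP.
Qed.

Theorem lemma4p8 (R : realType) (m : nat) (c : coef R m) :
  Sm_elem c ->
  (L1_invariant c <-> exists a : R[i], c = (fun nu => a * @q1pow R m nu)).
Proof.
move=> Hc; split.
- move=> Hinv; exists (c [ffun _ => 1]).
  apply: functional_extensionality => nu; rewrite /q1pow.
  case: ifP => [/forallP H1|H1].
    rewrite mulr1; congr (c _); apply/ffunP => j; rewrite ffunE; exact/eqP/H1.
  rewrite mulr0.
  have [Hs|Hs] := boolP (in_support nu); last by case: Hc => H _ _; exact: H.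
  apply: (@key R m c Hc Hinv _ nu Hs erefl).
  rewrite lt0n; apply/negP => /eqP/card0_eq H0.
  move/negbT: H1 => /forallPn [j Hj]; have := H0 j; rewrite !inE Hj //.
- case=> a ->; move=> k k0 mu; rewrite /act_e; case: ifP => // Hs.
  apply: big1 => l _; rewrite /q1pow; case: ifP; last by rewrite !mulr0.
  move/forallP => /(_ l); rewrite ffunE eqxx => /eqP H.
  move/forallP: Hs => /(_ l) H2; exfalso; lia.
Qed.
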